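(* Let $\nu$ be a Krull valuation on $\mathbb{K}[x]$, $\mu$ a valuation on $\overline{\mathbb{K}}[x]$ extending $\nu$, $Q$ a key polynomial for $\nu$ of degree $n$, and $a$ an optimizing root of $Q$. Assume $\nu(Q)\in\mu\overline{\mathbb{K}}$ and let $e$ be the least positive integer with $e\nu(Q)\in\mu\mathbb{K}(a)$. Then for every $g\in\mathbb{K}[x]$ with $\deg g<ne$ we have $\mu_{x-a}(g)=\mu(g)=\nu_Q(g)$.
   Context: $\overline{\mathbb{K}}$ is an algebraic closure of $\mathbb{K}$; $\mu\overline{\mathbb{K}}$ and $\mu\mathbb{K}(a)$ are the value groups of $\mu$ restricted to $\overline{\mathbb{K}}$ and to $\mathbb{K}(a)$. Truncations: $\nu_Q(f)=\min_i\nu(f_iQ^i)$ where $f=\sum f_iQ^i$ is the $Q$-expansion ($\deg f_i<\deg Q$), and $\mu_{x-a}(\sum_i c_i(x-a)^i)=\min_i\{\mu(c_i)+i\mu(x-a)\}$. Optimizing root: a root $c$ of $Q$ maximizing $\mu(x-c)$ among roots of $Q$. Key polynomials: for nonzero $f\in\mathbb{K}[x]$, with Hasse derivatives $\partial_bf=\sum_{i\ge b}\binom{i}{b}a_ix^{i-b}$ for $f=\sum a_ix^i$, $\epsilon(f)=\max_{1\le b\le\deg f}(\nu(f)-\nu(\partial_bf))/b$ if $\deg f>0$ and $\epsilon(f)=-\infty$ if $f$ is constant; a monic $Q$ is a key polynomial for $\nu$ if $\epsilon(f)\ge\epsilon(Q)$ implies $\deg f\ge\deg Q$ for all $f$. 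*)

(* Defs.v *)
From HB Require Import structures.
From mathcomp Require Import all_boot all_order ssralg poly polydiv.
Set Implicit Arguments. Unset Strict Implicit. Unset Printing Implicit Defensive.
Import Order.TTheory GRing.Theory.
Local Open Scope ring_scope.

Fact vg_display : Order.disp_t. Proof. exact: Order.Disp tt tt. Qed.

HB.mixin Record isOrderedZmod (G : Type)
    of Order.Total vg_display G & GRing.Zmodule G := {
  oz_leD2r : forall x y z : G, (x <= y)%O -> (x + z <= y + z)%O
}.
#[short(type="orderedZmodType")]
HB.structure Definition OrderedZmod :=
  { G of isOrderedZmod G & Order.Total vg_display G & GRing.Zmodule G }.

Section Values.
Context {G : orderedZmodType}.

(* G_oo := G u {oo}, encoded as option G with None = oo *)
Definition vle (x y : option G) : bool :=
  match x, y with
  | _, None => true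
  | None, Some _ => false
  | Some a, Some b => (a <= b)%O
  end.
Definition vadd (x y : option G) : option G :=
  match x, y with Some a, Some b => Some (a + b) | _, _ => None end.
Definition vmin (x y : option G) : option G := if vle x y then x else y.
Definition vmuln (n : nat) (x : option G) : option G :=
  match x with Some a => Some (a *+ n) | None => None end.

Definition is_valuation (R : nzRingType) (v : R -> option G) : Prop :=
  [/\ forall x, v x = None <-> x = 0,
      v 1 = Some 0,
      forall x y, v (x * y) = vadd (v x) (v y)
    & forall x y, vle (vmin (v x) (v y)) (v (x + y))].

(* Elements of the divisible hull Q (x) G together with -oo:
   None = -oo, Some (g, b) stands for g / b (b > 0 in all uses). *)
Definition fle (x y : option (G * nat)) : bool :=
  match x, y with
  | None, _ => true
  | Some _, None => false
  | Some (g, m), Some (h, n) => (g *+ n <= h *+ m)%O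
  end.
Definition fmax (x y : option (G * nat)) := if fle x y then y else x.

Section Poly.
Variable K : fieldType.
Variable nu : {poly K} -> option G.

Definition eps_term (f : {poly K}) (b : nat) : option (G * nat) :=
  match nu f, nu (nderivn b f) with
  | Some x, Some y => Some (x - y, b)
  | _, _ => None
  end.

Definition eps (f : {poly K}) : option (G * nat) :=
  if (size f <= 1)%N then None
  else \big[fmax/None]_(1 <= b < size f) eps_term f b.

Definition key_poly (Q : {poly K}) : Prop :=
  Q \is monic /\
  forall f : {poly K}, fle (eps Q) (eps f) -> ((size Q).-1 <= (size f).-1)%N.

(* i-th coefficient of the Q-expansion f = sum_i f_i Q^i, deg f_i < deg Q *)
Definition qexp (Q f : {poly K}) (i : nat) : {poly K} := (f %/ Q ^+ i) %% Q.

Definition trunc (Q f : {poly K}) : option G :=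
  \big[vmin/None]_(i < size f) nu (qexp Q f i * Q ^+ i).
End Poly.

Section Closure.
Variables (K : fieldType) (L : closedFieldType) (iota : {rmorphism K -> L}).
Variable mu : {poly L} -> option G.

(* mu_{x-a}(g) = min_i { mu(c_i) + i mu(x - a) }, g = sum_i c_i (x-a)^i *)
Definition trunc_lin (a : L) (g : {poly L}) : option G :=
  \big[vmin/None]_(i < size g)
     vadd (mu ((nderivn i g).[a])%:P) (vmuln i (mu ('X - a%:P))).

Definition optimizing_root (Q : {poly K}) (a : L) : Prop :=
  root (map_poly iota Q) a /\
  forall c : L, root (map_poly iota Q) c -> vle (mu ('X - c%:P)) (mu ('X - a%:P)).

Definition in_vg_Kbar (gamma : option G) : Prop :=
  exists c : L, c != 0 /\ mu c%:P = gamma.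

Definition in_vg_Ka (a : L) (gamma : option G) : Prop :=
  exists p q : {poly K},
    [/\ (map_poly iota q).[a] != 0, (map_poly iota p).[a] != 0 &
        mu (((map_poly iota p).[a] / (map_poly iota q).[a])%:P) = gamma].
End Closure.
End Values.

(* Main.v *)
Require Import Defs.
From Stdlib Require Import Arith ArithRing.
From HB Require Import structures.
From mathcomp Require Import all_boot all_order ssralg poly polydiv.
Set Implicit Arguments. Unset Strict Implicit. Unset Printing Implicit Defensive.
Import Order.TTheory GRing.Theory.
Local Open Scope ring_scope.

Section OG.
Variable G : orderedZmodType.
Implicit Types x y z w : G.

Lemma gleD2r x y z : ((x + z <= y + z) = (x <= y))%O.
Proof.
apply/idP/idP; last exact: oz_leD2r.
by move/(oz_leD2r _ _ (- z)); rewrite !addrK.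
Qed.

Lemma gleD x y z w : (x <= y)%O -> (z <= w)%O -> (x + z <= y + w)%O.
Proof.
move=> h1 h2; apply: (le_trans (oz_leD2r _ _ z h1)).
by rewrite ![y + _]addrC gleD2r.
Qed.

Lemma gltD2r x y z : ((x + z < y + z) = (x < y))%O.
Proof. by rewrite !lt_def gleD2r (inj_eq (addIr z)). Qed.

Lemma gleMn x y k : (x <= y)%O -> (x *+ k <= y *+ k)%O.
Proof.
move=> h; elim: k => [|k IH]; first by rewrite !mulr0n.
by rewrite !mulrS gleD.
Qed.

Lemma gltMn x y k : (0 < k)%N -> (x < y)%O -> (x *+ k < y *+ k)%O.
Proof.
case: k => // k _ h; elim: k => [|k IH]; first by rewrite !mulr1n.
rewrite (mulrS x) (mulrS y).
apply: (lt_le_trans (_ : x + x *+ k.+1 < y + x *+ k.+1)%O).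
  by rewrite gltD2r.
by rewrite ![y + _]addrC gleD2r ltW.
Qed.

Lemma gleMn2 x y k : (0 < k)%N -> ((x *+ k <= y *+ k) = (x <= y))%O.
Proof.
move=> k0; apply/idP/idP; last exact: gleMn.
apply: contraTT; rewrite -!ltNge; exact: gltMn.
Qed.

Lemma gdouble0 x : x + x = 0 -> x = 0.
Proof.
move=> h; case: (ltgtP x 0) => // hx.
  have : (x + x < 0 + x)%O by rewrite gltD2r.
  by rewrite h add0r => /lt_trans/(_ hx); rewrite ltxx.
have : (0 + x < x + x)%O by rewrite gltD2r.
by rewrite h add0r => /(lt_trans hx); rewrite ltxx.
Qed.

Implicit Types a b c d : option G.

Lemma vle_refl a : vle a a.
Proof. by case: a => //= ?; rewrite lexx. Qed.
Lemma vle_trans b a c : vle a b -> vle b c -> vle a c.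
Proof. by case: a; case: b; case: c => //= ? ? ?; apply: le_trans. Qed.
Lemma vle_total a b : vle a b || vle b a.
Proof. by case: a; case: b => //= ? ?; apply: le_total. Qed.
Lemma vle_anti a b : vle a b -> vle b a -> a = b.
Proof.
case: a; case: b => //= ? ? h1 h2; congr Some; apply/eqP.
by rewrite eq_le h1 h2.
Qed.
Lemma vleNgt a b : ~~ vle a b -> vle b a.
Proof. by move=> h; move: (vle_total a b); rewrite (negbTE h). Qed.
Lemma vle_None a : vle a None. Proof. by case: a. Qed.
Lemma vle_min c a b : vle c (vmin a b) = vle c a && vle c b.
Proof.
rewrite /vmin; case: ifP => h.
  by apply/idP/andP => [h1|[]//]; split => //; apply: vle_trans h.
apply/idP/andP => [h1|[]//]; split => //; apply: vle_trans h1 _.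
exact: vleNgt (negbT h).
Qed.
Lemma vmin_l a b : vle (vmin a b) a.
Proof. by move: (vle_refl (vmin a b)); rewrite vle_min => /andP[]. Qed.
Lemma vmin_r a b : vle (vmin a b) b.
Proof. by move: (vle_refl (vmin a b)); rewrite vle_min => /andP[]. Qed.
Lemma vminN a : vmin a None = a.
Proof. by rewrite /vmin vle_None. Qed.
Lemma vminNl a : vmin None a = a.
Proof. by rewrite /vmin; case: a. Qed.
Lemma vmin_eq a b : vmin a b = a \/ vmin a b = b.
Proof. by rewrite /vmin; case: ifP; [left|right]. Qed.


Lemma vmin_eqle a b : (forall c, vle c a = vle c b) -> a = b.
Proof.
move=> h; apply: vle_anti; first by rewrite -h vle_refl.
by rewrite h vle_refl.
Qed.
Lemma vminA : associative (@vmin G).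
Proof. by move=> a b c; apply: vmin_eqle => d; rewrite !vle_min andbA. Qed.
Lemma vminC : commutative (@vmin G).
Proof. by move=> a b; apply: vmin_eqle => d; rewrite !vle_min andbC. Qed.
Lemma vminNl' : left_id None (@vmin G).
Proof. by move=> a; rewrite /vmin; case: a. Qed.

Lemma vaddC a b : vadd a b = vadd b a.
Proof. by case: a; case: b => //= ? ?; rewrite addrC. Qed.
Lemma vaddA a b c : vadd a (vadd b c) = vadd (vadd a b) c.
Proof. by case: a; case: b; case: c => //= ? ? ?; rewrite addrA. Qed.
Lemma vadd0 a : vadd a (Some 0) = a.
Proof. by case: a => //= ?; rewrite addr0. Qed.
Lemma vaddN a : vadd a None = None. Proof. by case: a. Qed.
Lemma vle_add a b c d : vle a b -> vle c d -> vle (vadd a c) (vadd b d).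
Proof. by case: a; case: b; case: c; case: d => //= ? ? ? ?; apply: gleD. Qed.
Lemma vle_add2r a b g : vle (vadd a (Some g)) (vadd b (Some g)) = vle a b.
Proof. by case: a; case: b => //= ? ?; rewrite gleD2r. Qed.
Lemma vle_add2l a b g : vle (vadd (Some g) a) (vadd (Some g) b) = vle a b.
Proof. by rewrite ![vadd (Some g) _]vaddC vle_add2r. Qed.
Lemma vmuln0 a : vmuln 0 a = if a is None then None else Some 0.
Proof. by case: a. Qed.
Lemma vmulnS k a : vmuln k.+1 a = vadd (vmuln k a) a.
Proof. by case: a => //= ?; rewrite mulrSr. Qed.
Lemma vmulnD k l a : vmuln (k + l) a = vadd (vmuln k a) (vmuln l a).
Proof. by case: a => //= ?; rewrite mulrnDr. Qed.

Definition fpos (x : option (G * nat)) := if x is Some (_, m) then (0 < m)%N else true.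
Lemma fle_refl (x : option (G * nat)) : fle x x.
Proof. by case: x => [[g m]|] //=; rewrite lexx. Qed.
Lemma fle_total (x y : option (G * nat)) : fle x y || fle y x.
Proof. by case: x => [[g m]|]; case: y => [[h n]|] //=; apply: le_total. Qed.
Lemma fle_trans (y x z : option (G * nat)) : fpos y -> fle x y -> fle y z -> fle x z.
Proof.
case: x => [[g m]|] //; case: y => [[h n]|] //; case: z => [[k p]|] //= n0 h1 h2.
have AC (u : G) (i j : nat) : (u *+ i) *+ j = (u *+ j) *+ i.
  by rewrite -!mulrnA mulnC.
rewrite -(gleMn2 _ _ n0) AC.
apply: le_trans (gleMn p h1) _; rewrite AC [X in (_ <= X)%O]AC.
exact: gleMn.
Qed.
End OG.
HB.instance Definition _ (G : orderedZmodType) :=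
  Monoid.isComLaw.Build (option G) None (@vmin G) (@vminA G) (@vminC G) (@vminNl' G).



Section BigMin.
Variable G : orderedZmodType.
Implicit Types c : option G.

Definition bmin N (F : nat -> option G) := \big[vmin/None]_(i < N) F i.

Lemma bmin_recr N F : bmin N.+1 F = vmin (bmin N F) (F N).
Proof. by rewrite /bmin big_ord_recr. Qed.
Lemma bmin0 F : bmin 0 F = None.
Proof. by rewrite /bmin big_ord0. Qed.

Lemma bmin_ge c N F : (forall i, (i < N)%N -> vle c (F i)) -> vle c (bmin N F).
Proof.
elim: N => [|N IH] h; first by rewrite bmin0 vle_None.
rewrite bmin_recr vle_min IH ?h // => i hi; apply: h; exact: ltnW.
Qed.

Lemma bmin_le N F i : (i < N)%N -> vle (bmin N F) (F i).
Proof.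
elim: N => [|N IH] //; rewrite ltnS leq_eqVlt => /orP[/eqP->|hi].
  by rewrite bmin_recr vmin_r.
by rewrite bmin_recr; apply: vle_trans (vmin_l _ _) (IH hi).
Qed.

Lemma bmin_att N F : bmin N F = None \/ exists2 i, (i < N)%N & bmin N F = F i.
Proof.
elim: N => [|N IH]; first by rewrite bmin0; left.
rewrite bmin_recr; case: (vmin_eq (bmin N F) (F N)) => ->.
  case: IH => [->|[i hi ->]]; [by left|right; exists i => //; exact: ltnW].
by right; exists N.
Qed.

Lemma bmin_widen N M F : (N <= M)%N -> (forall i, (N <= i < M)%N -> F i = None) ->
  bmin N F = bmin M F.
Proof.
move=> hNM h; elim: M hNM h => [|M IH]; first by rewrite leqn0 => /eqP->.
rewrite leq_eqVlt => /orP[/eqP-> //|]; rewrite ltnS => hNM h.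
rewrite bmin_recr h; last by rewrite hNM ltnSn.
rewrite vminN -IH // => i /andP[h1 h2].
by apply: h; rewrite h1 ltnS ltnW.
Qed.

Lemma bmin_ext N F F' : (forall i, (i < N)%N -> F i = F' i) -> bmin N F = bmin N F'.
Proof. by move=> h; apply: eq_bigr => i _; apply: h. Qed.
End BigMin.

Section Val.
Variables (G : orderedZmodType) (R : comNzRingType) (v : R -> option G).
Hypothesis hv : is_valuation v.

Lemma v0 : v 0 = None. Proof. by case: hv => h _ _ _; apply/h. Qed.
Lemma vNone x : (v x = None) <-> x = 0. Proof. by case: hv. Qed.
Lemma v1 : v 1 = Some 0. Proof. by case: hv. Qed.
Lemma vM x y : v (x * y) = vadd (v x) (v y). Proof. by case: hv. Qed.
Lemma vD x y : vle (vmin (v x) (v y)) (v (x + y)). Proof. by case: hv. Qed.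
Lemma vSome x : x != 0 -> exists g, v x = Some g.
Proof. by case E: (v x) => [g|]; [exists g|move/vNone: E => ->; rewrite eqxx]. Qed.

Lemma vX x k : x != 0 -> v (x ^+ k) = vmuln k (v x).
Proof.
move=> nz; elim: k => [|k IH]; first by rewrite expr0 v1; case: (vSome nz) => g ->.
by rewrite exprSr vM IH vmulnS.
Qed.

Lemma vN1 : v (-1) = Some 0.
Proof.
have : v (-1 * -1) = Some 0 by rewrite mulrNN mulr1 v1.
rewrite vM; case E: (v (-1)) => [g|] //= [] /gdouble0 -> //.
Qed.
Lemma vN x : v (- x) = v x.
Proof. by rewrite -mulN1r vM vN1 vaddC vadd0. Qed.

Lemma vD_ge c x y : vle c (v x) -> vle c (v y) -> vle c (v (x + y)).
Proof. by move=> h1 h2; apply: vle_trans (vD x y); rewrite vle_min h1. Qed.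

Lemma vsum_ge c (I : Type) (r : seq I) (P : pred I) (F : I -> R) :
  (forall i, P i -> vle c (v (F i))) -> vle c (v (\sum_(i <- r | P i) F i)).
Proof.
move=> h; apply: (big_ind (fun s => vle c (v s))) => //.
  by rewrite v0 vle_None.
exact: vD_ge.
Qed.

Lemma vD_lt x y : ~~ vle (v y) (v x) -> v (x + y) = v x.
Proof.
move=> h; apply: vle_anti.
  have := vD (x + y) (- y); rewrite addrK vN => h2.
  case/orP: (vle_total (v (x + y)) (v y)) => h3.
    by rewrite /vmin h3 in h2.
  move: h2; rewrite /vmin; case: ifP => // _ h2; by rewrite h2 in h.
apply: (@vle_trans _ _ _ _ _ (vD x y)).
by rewrite /vmin (vleNgt h) vle_refl.
Qed.

Lemma vD_min x y : (v x = v y -> v x = None) -> v (x + y) = vmin (v x) (v y).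
Proof.
move=> h; case/orP: (vle_total (v x) (v y)) => hxy.
  have [e|ne] := eqVneq (v x) (v y).
    move: (h e) => /vNone x0; move: e; rewrite x0 v0 => /esym/vNone ->.
    by rewrite addr0 v0 vminN.
  rewrite /vmin hxy vD_lt //; apply: contra ne => h2; apply/eqP; exact: vle_anti.
have [e|ne] := eqVneq (v x) (v y).
  move: (h e) => /vNone x0; move: e; rewrite x0 v0 => /esym/vNone ->.
  by rewrite addr0 v0 vminN.
have nle : ~~ vle (v x) (v y).
  by apply: contra ne => h2; apply/eqP; exact: vle_anti.
by rewrite /vmin (negbTE nle) addrC vD_lt.
Qed.

Lemma vMn x k : vle (v x) (v (x *+ k)).
Proof.
elim: k => [|k IH]; first by rewrite mulr0n v0 vle_None.
by rewrite mulrS; apply: vD_ge => //; rewrite vle_refl.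
Qed.

Lemma vsum_lt x0 (I : Type) (r : seq I) (P : pred I) (F : I -> R) :
  x0 != 0 -> (forall i, P i -> ~~ vle (v (F i)) (v x0)) ->
  v (x0 + \sum_(i <- r | P i) F i) = v x0.
Proof.
move=> nz h; apply: vD_lt.
apply: (big_ind (fun s => ~~ vle (v s) (v x0))) => //.
  by rewrite v0; case: (vSome nz) => g ->.
move=> s t hs ht; apply: contraL (vD s t) => h2.
rewrite /vmin; case: ifP => _; apply/negP => h3.
  by move/negP: hs; apply; apply: vle_trans h3 h2.
by move/negP: ht; apply; apply: vle_trans h3 h2.
Qed.
End Val.


Section TL.
Variables (G : orderedZmodType) (L : closedFieldType) (mu : {poly L} -> option G).
Hypothesis mu_val : is_valuation mu.
Variable a : L.
Implicit Types F H : {poly L}.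

Definition dl := mu ('X - a%:P).
Definition term (F : {poly L}) i := vadd (mu (F^`N(i).[a])%:P) (vmuln i dl).

Lemma TL_def F : trunc_lin mu a F = bmin (size F) (term F).
Proof. by []. Qed.

Lemma dl_nz : dl <> None.
Proof. by move/(vNone mu_val)/eqP; rewrite polyXsubC_eq0. Qed.

Lemma term_big F i : (size F <= i)%N -> term F i = None.
Proof. by move=> h; rewrite /term nderivn_poly0 // horner0 (v0 mu_val). Qed.

Lemma TL_wide N F : (size F <= N)%N -> trunc_lin mu a F = bmin N (term F).
Proof.
move=> h; rewrite TL_def; apply: bmin_widen => // i /andP[h1 _].
exact: term_big.
Qed.

Lemma TL_le F i : vle (trunc_lin mu a F) (term F i).
Proof.
case: (ltnP i (size F)) => h; first by rewrite TL_def; exact: bmin_le.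
by rewrite term_big // vle_None.
Qed.

Lemma TL_ge c F : (forall i, vle c (term F i)) -> vle c (trunc_lin mu a F).
Proof. by move=> h; rewrite TL_def; apply: bmin_ge. Qed.

Lemma taylor_at (F : {poly L}) (x : {poly L}) :
  F^:P.[x] = \sum_(i < size F) (F^`N(i).[a])%:P * (x - a%:P) ^+ i.
Proof.
rewrite -{1}(subrK a%:P x) addrC.
rewrite nderiv_taylor; last exact: mulrC.
rewrite size_map_polyC; apply: eq_bigr => i _.
by rewrite nderivn_map horner_map.
Qed.

Lemma polyX_eval (F : {poly L}) : F^:P.['X] = F.
Proof. by rewrite -[RHS]comp_polyXr. Qed.

Lemma shift_coef (F : {poly L}) i : (F \Po ('X + a%:P))`_i = F^`N(i).[a].
Proof.
rewrite /comp_poly taylor_at addrK.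
have -> : \sum_(i < size F) (F^`N(i).[a])%:P * 'X ^+ i =
    \poly_(i < size F) F^`N(i).[a].
  by rewrite poly_def; apply: eq_bigr => j _; rewrite mul_polyC.
rewrite coef_poly; case: ltnP => // h.
by rewrite nderivn_poly0 // horner0.
Qed.

Lemma vle_addD (c A B C D : option G) : vle c (vadd A D) -> vle c (vadd B D) ->
  vle (vmin A B) C -> vle c (vadd C D).
Proof.
move=> h1 h2 h3; apply: vle_trans (vle_add h3 (vle_refl D)).
by case: (vmin_eq A B) => ->.
Qed.

Lemma vsumD (c D : option G) (I : Type) (r : seq I) (P : pred I) (x : I -> L) :
  (forall i, P i -> vle c (vadd (mu (x i)%:P) D)) ->
  vle c (vadd (mu (\sum_(i <- r | P i) x i)%:P) D).
Proof.
move=> h; apply: (big_ind (fun s => vle c (vadd (mu s%:P) D))) => //.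
  by rewrite (v0 mu_val) vle_None.
move=> s t hs ht; apply: vle_addD hs ht _; rewrite polyCD; exact: (vD mu_val).
Qed.

Lemma T1 F : vle (trunc_lin mu a F) (mu F).
Proof.
rewrite -{2}[F]polyX_eval taylor_at.
apply: (vsum_ge mu_val) => i _.
rewrite (vM mu_val) (vX mu_val) ?polyXsubC_eq0 //; exact: TL_le.
Qed.

Lemma TL0 : trunc_lin mu a 0 = None.
Proof. by rewrite TL_def size_poly0 bmin0. Qed.

Lemma T2 c F H : vle c (trunc_lin mu a F) -> vle c (trunc_lin mu a H) ->
  vle c (trunc_lin mu a (F + H)).
Proof.
move=> h1 h2; apply: TL_ge => i.
rewrite /term nderivnD hornerD.
apply: (vle_addD (A := mu (F^`N(i).[a])%:P) (B := mu (H^`N(i).[a])%:P)).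
- exact: vle_trans h1 (TL_le F i).
- exact: vle_trans h2 (TL_le H i).
rewrite polyCD; exact: (vD mu_val).
Qed.

Lemma term_shift F j : term F j = vadd (mu ((F \Po ('X + a%:P))`_j)%:P) (vmuln j dl).
Proof. by rewrite shift_coef. Qed.

Lemma vadd_rearr (A B D : option G) i j : (j <= i)%N ->
  vadd (vadd A B) (vmuln i D) = vadd (vadd A (vmuln j D)) (vadd B (vmuln (i - j) D)).
Proof.
move=> h; rewrite -{1}(subnKC h) vmulnD.
rewrite -!vaddA; congr vadd; rewrite !vaddA; congr vadd; exact: vaddC.
Qed.

Lemma T3 F H : vle (vadd (trunc_lin mu a F) (trunc_lin mu a H)) (trunc_lin mu a (F * H)).
Proof.
apply: TL_ge => i; rewrite term_shift comp_polyM coefM.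
apply: vsumD => j _; have hj : (j <= i)%N by rewrite -ltnS ltn_ord.
rewrite polyCM (vM mu_val) (vadd_rearr _ _ _ hj).
rewrite -term_shift.
apply: vle_add; first exact: TL_le.
have -> : vadd (mu ((H \Po ('X + a%:P))`_(i - j))%:P) (vmuln (i - j) dl) = term H (i - j).
  by rewrite term_shift.
exact: TL_le.
Qed.

Lemma TL1 : trunc_lin mu a 1 = Some 0.
Proof.
rewrite TL_def size_poly1 bmin_recr bmin0 vminNl /term nderivn0 hornerC.
rewrite (v1 mu_val) /=; case: dl dl_nz => //= d _; rewrite mulr0n addr0 //.
Qed.

Lemma TL_geM F H : vle (mu F) (trunc_lin mu a F) -> vle (mu H) (trunc_lin mu a H) ->
  vle (mu (F * H)) (trunc_lin mu a (F * H)).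
Proof.
move=> h1 h2; rewrite (vM mu_val); apply: vle_trans (T3 F H); exact: vle_add.
Qed.

Lemma TL_geX F k : vle (mu F) (trunc_lin mu a F) -> vle (mu (F ^+ k)) (trunc_lin mu a (F ^+ k)).
Proof.
move=> h; elim: k => [|k IH]; first by rewrite expr0 TL1 (v1 mu_val) vle_refl.
by rewrite exprS; apply: TL_geM.
Qed.

Lemma TL_sum c (I : Type) (r : seq I) (P : pred I) (F : I -> {poly L}) :
  (forall i, P i -> vle c (trunc_lin mu a (F i))) ->
  vle c (trunc_lin mu a (\sum_(i <- r | P i) F i)).
Proof.
move=> h; apply: (big_ind (fun s => vle c (trunc_lin mu a s))) => //.
  by rewrite TL0 vle_None.
exact: T2.
Qed.

Lemma TL_XsubC c : trunc_lin mu a ('X - c%:P) = vmin (mu (a - c)%:P) dl.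
Proof.
rewrite TL_def size_XsubC bmin_recr bmin_recr bmin0 vminNl /term nderivn0.
rewrite nderivn1 derivXsubC !hornerE /=.
rewrite (v1 mu_val); case: dl dl_nz => //= d _.
by rewrite mulr0n vadd0 mulr1n add0r.
Qed.
End TL.


Lemma bin_trin b k i :
  ('C(b + (k + i), b) * 'C(k + i, k) = 'C(k + b + i, k + b) * 'C(k + b, b))%N.
Proof.
apply/eqP; rewrite -(eqn_pmul2r (fact_gt0 b)) -(eqn_pmul2r (fact_gt0 k)).
rewrite -(eqn_pmul2r (fact_gt0 i)); apply/eqP.
have e1 := bin_fact (leq_addr (k + i) b).
have e2 := bin_fact (leq_addr i k).
have e3 := bin_fact (leq_addr i (k + b)).
have e4 := bin_fact (leq_addl k b).
rewrite addKn in e1; rewrite addKn in e2; rewrite addKn in e3; rewrite addnK in e4.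
rewrite -!multE.
transitivity (Nat.mul ('C(b + (k + i), b)) (Nat.mul (b`!) (Nat.mul ('C(k + i, k)) (Nat.mul (k`!) (i`!))))).
  by match goal with |- ?x = ?y => change (@eq nat x y); ring end.
transitivity (Nat.mul ('C(k + b + i, k + b)) (Nat.mul (Nat.mul ('C(k + b, b)) (Nat.mul (b`!) (k`!))) (i`!))); last by match goal with |- ?x = ?y => change (@eq nat x y); ring end.
rewrite !multE e2 e4.
by rewrite e1 e3 addnA [(b + k)%N]addnC.
Qed.

Lemma nderivnN2 (R : nzRingType) (p : {poly R}) b k :
  (p^`N(b))^`N(k) = p^`N(k + b) *+ 'C(k + b, b).
Proof.
apply/polyP => i; rewrite coefMn !coef_nderivn -!mulrnA.
rewrite [(b + (k + i))%N]addnA [(b + k)%N]addnC.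
by rewrite -bin_trin addnA (addnC b k).
Qed.

Section FBig.
Variable G : orderedZmodType.
Implicit Types (r : seq nat) (F : nat -> option (G * nat)) (c : option (G * nat)).

Lemma fbig_le r F c : (forall b, b \in r -> fle (F b) c) ->
  fle (\big[fmax/None]_(b <- r) F b) c.
Proof.
elim: r => [|x r IH] h; first by rewrite big_nil.
rewrite big_cons /fmax; case: ifP => _.
  by apply: IH => b hb; apply: h; rewrite inE hb orbT.
by apply: h; rewrite inE eqxx.
Qed.

Lemma fbig_pos r F : (forall b, b \in r -> fpos (F b)) ->
  fpos (\big[fmax/None]_(b <- r) F b).
Proof.
elim: r => [|x r IH] h; first by rewrite big_nil.
rewrite big_cons /fmax; case: ifP => _.
  by apply: IH => b hb; apply: h; rewrite inE hb orbT.
by apply: h; rewrite inE eqxx.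
Qed.

Lemma fbig_ge r F c j : (forall b, b \in r -> fpos (F b)) -> j \in r -> fle c (F j) ->
  fle c (\big[fmax/None]_(b <- r) F b).
Proof.
elim: r => [|x r IH] //= hp hj hc.
have hpr : forall b, b \in r -> fpos (F b).
  by move=> b hb; apply: hp; rewrite inE hb orbT.
have hpx : fpos (F x) by apply: hp; rewrite inE eqxx.
rewrite big_cons /fmax; case: ifP => E.
  case: (eqVneq j x) => [ejx|njx].
    by rewrite ejx in hc; exact: fle_trans hpx hc E.
  by apply: IH => //; move: hj; rewrite inE (negbTE njx).
case: (eqVneq j x) => [ejx|njx]; first by rewrite -ejx.
have hjr : j \in r by move: hj; rewrite inE (negbTE njx).
have h1 := IH hpr hjr hc.
have h2 : fle (\big[fmax/None]_(b <- r) F b) (F x).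
  by move: (fle_total (F x) (\big[fmax/None]_(b <- r) F b)); rewrite E.
exact: fle_trans (fbig_pos hpr) h1 h2.
Qed.
End FBig.


Lemma vleT (G : orderedZmodType) (x y z : option G) : vle x y -> vle y z -> vle x z.
Proof. exact: vle_trans. Qed.

Lemma vsum_distinct (G : orderedZmodType) (R : comNzRingType) (v : R -> option G)
  (hv : is_valuation v) (t : nat -> R) N :
  (forall i j, (i < j < N)%N -> v (t i) = v (t j) -> v (t i) = None) ->
  v (\sum_(i < N) t i) = bmin N (fun i => v (t i)).
Proof.
elim: N => [|N IH] h; first by rewrite big_ord0 bmin0 (v0 hv).
rewrite big_ord_recr bmin_recr /= -IH; last first.
  by move=> i j /andP[h1 h2] e; apply: h e; rewrite h1 ltnW.
apply: (vD_min hv); rewrite IH; last first.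
  by move=> i j /andP[h1 h2] e; apply: h e; rewrite h1 ltnW.
case: (bmin_att N (fun i => v (t i))) => [->//|[i hi ->]] e.
by apply: h e; rewrite hi ltnSn.
Qed.

Section Main.
Variables (G : orderedZmodType) (K : fieldType) (L : closedFieldType)
  (iota : {rmorphism K -> L}) (nu : {poly K} -> option G) (mu : {poly L} -> option G).
Hypotheses (nu_val : is_valuation nu) (mu_val : is_valuation mu)
  (mu_ext : forall f : {poly K}, mu (map_poly iota f) = nu f).
Variables (Q : {poly K}) (a : L).
Hypotheses (hQ : key_poly nu Q) (ha : optimizing_root iota mu Q a).

Local Notation dl := (dl mu a).
Local Notation TL := (trunc_lin mu a).

Lemma Q_nz : Q != 0.
Proof. by case: hQ => /monic_neq0. Qed.

Lemma Q_size : (1 < size Q)%N.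
Proof.
rewrite ltnNge; apply/negP => h; case: ha => hr _.
move: hr; rewrite (size1_polyC h) map_polyC /= /root hornerC.
case: hQ => /monicP; rewrite lead_coefE.
have -> : (size Q).-1 = 0%N.
  by move: h; case: (size Q) => [|[|]].
by move=> ->; rewrite rmorph1 oner_eq0.
Qed.

Lemma d_ex : exists d, dl = Some d.
Proof. by case E: dl => [d|]; [exists d|case: (dl_nz mu_val (a:=a))]. Qed.

Lemma TL_prod (r : seq L) :
  (forall z, z \in r -> vle (mu ('X - z%:P)) (TL ('X - z%:P))) ->
  vle (mu (\prod_(z <- r) ('X - z%:P))) (TL (\prod_(z <- r) ('X - z%:P))).
Proof.
elim: r => [|x r IH] h; first by rewrite !big_nil (TL1 mu_val) (v1 mu_val) vle_refl.
rewrite !big_cons; apply: TL_geM => //; first by apply: h; rewrite inE eqxx.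
by apply: IH => z hz; apply: h; rewrite inE hz orbT.
Qed.

Lemma XsubC_opt z : root (map_poly iota Q) z ->
  vle (mu ('X - z%:P)) (TL ('X - z%:P)).
Proof.
move=> hz; have hopt := ha.2 z hz.
rewrite (TL_XsubC mu_val) vle_min hopt andbT.
apply/negP => /negP hlt.
have e : 'X - z%:P = (a - z)%:P + ('X - a%:P).
  by rewrite polyCB [RHS]addrC -[RHS]addrA addKr.
have nle : ~~ vle (mu ('X - a%:P)) (mu (a - z)%:P).
  apply: contra hlt => h2; exact: vle_trans hopt h2.
move: hlt; rewrite e (vD_lt mu_val nle) vle_refl //.
Qed.

Lemma L2 : vle (mu (map_poly iota Q)) (TL (map_poly iota Q)).
Proof.
have [r hr] := closed_field_poly_normal (map_poly iota Q).
have lc : lead_coef (map_poly iota Q) = 1.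
  by apply/monicP; rewrite map_monic; case: hQ.
rewrite hr lc scale1r; apply: TL_prod => z hz; apply: XsubC_opt.
by rewrite hr lc scale1r root_prod_XsubC.
Qed.

Lemma L3 b : vle (nu Q) (vadd (nu (Q^`N(b))) (vmuln b dl)).
Proof.
rewrite -!mu_ext -nderivn_map; set F := map_poly iota Q.
apply: vleT L2 _.
apply: (@vleT _ _ (vadd (TL (F^`N(b))) (vmuln b dl))); last first.
  by apply: vle_add; [exact: T1|exact: vle_refl].
rewrite (TL_def mu a (F^`N(b))).
case: (bmin_att (size F^`N(b)) (term mu a F^`N(b))) => [->|[k _ ->]].
  by rewrite vle_None.
apply: vleT (TL_le mu_val a F (k + b)) _.
rewrite /term nderivnN2 hornerMn polyCMn vmulnD vaddA.
apply: vle_add; last exact: vle_refl.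
apply: vle_add; last exact: vle_refl.
exact: vMn.
Qed.

Lemma epsQ_le d : dl = Some d -> fle (eps nu Q) (Some (d, 1%N)).
Proof.
move=> hd; rewrite /eps leqNgt Q_size /=.
apply: fbig_le => b hb; rewrite /eps_term.
have [q hq] := vSome nu_val Q_nz; rewrite hq.
case E: (nu Q^`N(b)) => [y|] //=.
have := L3 b; rewrite hq E hd /= mulr1n => h.
by rewrite -(gleD2r _ _ y) subrK addrC.
Qed.

Lemma claimB (h : {poly K}) j : (size h < size Q)%N -> h != 0 -> (0 < j)%N ->
  ~~ vle (vadd (nu (h^`N(j))) (vmuln j dl)) (nu h).
Proof.
move=> hs hnz hj0; apply/negP => hle.
have [d hd] := d_ex; have [x hx] := vSome nu_val hnz.
case E: (nu (h^`N(j))) => [y|]; last by rewrite E hx in hle.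
have hj : (j < size h)%N.
  rewrite ltnNge; apply/negP => hsj; move: E; rewrite nderivn_poly0 //.
  by rewrite (v0 nu_val).
rewrite E hd hx /= in hle.
have h2 : (1 < size h)%N by apply: leq_ltn_trans hj.
have key : fle (eps nu Q) (eps nu h).
  apply: (@fle_trans _ (Some (d, 1%N))) => //; first exact: epsQ_le.
  rewrite /eps; case: ifP => [|_]; first by rewrite leqNgt h2.
  apply: (@fbig_ge _ _ _ _ j).
  - move=> b; rewrite mem_index_iota => /andP[hb _]; rewrite /eps_term.
    by case: (nu h); case: (nu h^`N(b)).
  - by rewrite mem_index_iota hj0 hj.
  rewrite /eps_term hx E /= mulr1n.
  by rewrite -(gleD2r _ _ y) subrK addrC.
have := hQ.2 h key.
move: hs h2; case: (size Q) => // m; case: (size h) => // k /=.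
rewrite ltnS => h1 _ h3.
by move: (leq_ltn_trans h3 h1); rewrite ltnn.
Qed.

Lemma claimA (h : {poly K}) : (size h < size Q)%N ->
  mu ((map_poly iota h).[a])%:P = nu h.
Proof.
move=> hs; have [->|hnz] := eqVneq h 0.
  by rewrite rmorph0 horner0 (v0 mu_val) (v0 nu_val).
set H := map_poly iota h.
have Hnz : H != 0 by rewrite map_poly_eq0.
have e : (H.[a])%:P = H + \sum_(i < (size H).-1)
    H^`N(i.+1) * (a%:P - 'X) ^+ i.+1.
  rewrite -horner_map /=.
  rewrite {1}(_ : a%:P = 'X + (a%:P - 'X)); last by rewrite addrCA subrr addr0.
  rewrite nderiv_taylor; last exact: mulrC.
  rewrite size_map_polyC (polySpred Hnz) big_ord_recl /=.
  rewrite nderivn_map polyX_eval nderivn0 expr0 mulr1; congr (_ + _).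
  by apply: eq_bigr => i _; rewrite nderivn_map polyX_eval.
rewrite e (vsum_lt mu_val) // ?mu_ext // => i _.
have hX : a%:P - 'X != 0 :> {poly L}.
  by rewrite -opprB oppr_eq0 polyXsubC_eq0.
rewrite (vM mu_val) (vX mu_val) // -opprB (vN mu_val).
rewrite /H nderivn_map mu_ext.
exact: claimB.
Qed.

Lemma size_nderivn_le (R : nzRingType) (p : {poly R}) k : (size p^`N(k) <= size p)%N.
Proof. by rewrite /nderivn; apply: leq_trans (size_poly _ _) (leq_subr _ _). Qed.

Lemma L5 (h : {poly K}) : (size h < size Q)%N ->
  vle (nu h) (TL (map_poly iota h)).
Proof.
move=> hs; have [->|hnz] := eqVneq h 0.
  by rewrite rmorph0 TL0 vle_None.
apply: TL_ge => i; rewrite /term.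
case: i => [|i].
  rewrite nderivn0 claimA //; have [d ->] := d_ex; case: (nu h) => //= x.
  by rewrite mulr0n addr0 lexx.
rewrite nderivn_map.
have hs' : (size h^`N(i.+1) < size Q)%N by apply: leq_ltn_trans (size_nderivn_le _ _) hs.
rewrite claimA //; apply: vleNgt; exact: claimB.
Qed.

Lemma qexp_dec (g : {poly K}) N :
  g = \sum_(i < N) qexp Q g i * Q ^+ i + (g %/ Q ^+ N) * Q ^+ N.
Proof.
elim: N => [|N IH]; first by rewrite big_ord0 add0r expr0 divp1 mulr1.
rewrite {1}IH big_ord_recr /= -addrA; congr (_ + _).
rewrite {1}(divp_eq (g %/ Q ^+ N) Q) divp_divl -exprSr /qexp.
by rewrite mulrDl addrC exprSr mulrA [_ * Q * _]mulrAC -mulrA.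
Qed.

Lemma size_Qexp i : size (Q ^+ i) = ((size Q).-1 * i).+1.
Proof.
rewrite -(size_exp Q i) prednK // lt0n size_poly_eq0 expf_neq0 //; exact: Q_nz.
Qed.

Lemma qexp_zero (g : {poly K}) i : (size g <= (size Q).-1 * i)%N -> qexp Q g i = 0.
Proof. by move=> h; rewrite /qexp divp_small ?mod0p // size_Qexp ltnS. Qed.

Lemma final (e : nat) (he : (0 < e)%N)
  (hemin : forall e' : nat, (0 < e' < e)%N -> ~ in_vg_Ka iota mu a (vmuln e' (nu Q)))
  (g : {poly K}) : ((size g).-1 < (size Q).-1 * e)%N ->
    TL (map_poly iota g) = mu (map_poly iota g) /\
    mu (map_poly iota g) = trunc nu Q g.
Proof.
move=> hg.
have hn : (0 < (size Q).-1)%N by rewrite -ltnS prednK ?Q_size // ltnW // Q_size.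
have hsg : (size g <= (size Q).-1 * e)%N.
  by move: hg; case: (size g) => //= k.
set t := fun i => qexp Q g i * Q ^+ i.
have E1 : g = \sum_(i < e) t i.
  rewrite {1}(qexp_dec g e) divp_small ?mul0r ?addr0 //.
  by rewrite size_Qexp ltnS.
have [q hq] := vSome nu_val Q_nz.
have hsz i : (size (qexp Q g i) < size Q)%N by rewrite ltn_modp Q_nz.
have Hmu : mu (map_poly iota g) = bmin e (fun i => nu (t i)).
  rewrite {1}E1 rmorph_sum /=.
  rewrite (@vsum_distinct _ _ _ mu_val (fun i => map_poly iota (t i))).
    by apply: bmin_ext => i _; rewrite mu_ext.
  move=> i j /andP[hij hje]; rewrite !mu_ext.
  case E: (nu (t i)) => [s|] // E'.
  exfalso.
  move: E E'; rewrite /t !(vM nu_val) !(vX nu_val _ Q_nz) hq.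
  case Ei: (nu (qexp Q g i)) => [ui|] //; case Ej: (nu (qexp Q g j)) => [uj|] //= [<-] [].
  move=> huij.
  have hji : (0 < j - i < e)%N.
    by rewrite subn_gt0 hij /=; apply: leq_ltn_trans (leq_subr _ _) hje.
  apply: (hemin _ hji).
  set ci := (map_poly iota (qexp Q g i)).[a].
  set cj := (map_poly iota (qexp Q g j)).[a].
  have hci : mu ci%:P = Some ui by rewrite claimA.
  have hcj : mu cj%:P = Some uj by rewrite claimA.
  have ci0 : ci != 0 by apply/eqP => c0; move: hci; rewrite c0 (v0 mu_val).
  have cj0 : cj != 0 by apply/eqP => c0; move: hcj; rewrite c0 (v0 mu_val).
  exists (qexp Q g i), (qexp Q g j); split => //.
  have : mu ci%:P = vadd (mu (ci / cj)%:P) (mu cj%:P).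
    by rewrite -(vM mu_val) -polyCM divfK.
  rewrite hci hcj; case: (mu (ci / cj)%:P) => // w [] hw /=.
  rewrite hq /=; congr Some; apply: (addIr uj); rewrite -hw.
  rewrite -(subnKC (ltnW hij)) mulrnDr addrA in huij.
  by apply: (addIr (q *+ i)); rewrite huij addrAC [uj + _]addrC.
split; last first.
  rewrite Hmu /trunc.
  change (bmin e (fun i => nu (t i)) = bmin (size g) (fun i => nu (t i))).
  have hz i : (e <= i)%N || (size g <= i)%N -> nu (t i) = None.
    move=> hi; rewrite /t qexp_zero ?mul0r ?(v0 nu_val) //.
    case/orP: hi => hi; first by apply: leq_trans hsg _; rewrite leq_mul2l hi orbT.
    by apply: leq_trans hi _; rewrite leq_pmull.
  rewrite (@bmin_widen _ e (maxn e (size g))) ?leq_maxl //; last first.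
    by move=> i /andP[hi _]; apply: hz; rewrite hi.
  rewrite (@bmin_widen _ (size g) (maxn e (size g))) ?leq_maxr //.
  by move=> i /andP[hi _]; apply: hz; rewrite hi orbT.
apply: vle_anti; first exact: T1.
rewrite Hmu {1}E1 rmorph_sum /=.
apply: (TL_sum mu_val) => i _.
apply: vleT (bmin_le _ (ltn_ord i)) _.
rewrite /t -mu_ext rmorphM rmorphXn /=.
apply: (TL_geM mu_val); first by rewrite mu_ext; apply: L5.
exact: (TL_geX mu_val) L2.
Qed.
End Main.


Theorem lemma3p9 (G : orderedZmodType)
  (K : fieldType) (L : closedFieldType) (iota : {rmorphism K -> L})
  (L_alg : forall z : L, exists2 p : {poly K}, p != 0 & root (map_poly iota p) z)
  (nu : {poly K} -> option G) (mu : {poly L} -> option G)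
  (nu_val : is_valuation nu) (mu_val : is_valuation mu)
  (mu_ext : forall f : {poly K}, mu (map_poly iota f) = nu f)
  (Q : {poly K}) (n : nat) (a : L) (e : nat)
  (hQ : key_poly nu Q) (hn : (size Q).-1 = n)
  (ha : optimizing_root iota mu Q a)
  (hQv : in_vg_Kbar mu (nu Q))
  (he : (0 < e)%N) (heQ : in_vg_Ka iota mu a (vmuln e (nu Q)))
  (hemin : forall e' : nat, (0 < e' < e)%N -> ~ in_vg_Ka iota mu a (vmuln e' (nu Q))) :
  forall g : {poly K}, ((size g).-1 < n * e)%N ->
    trunc_lin mu a (map_poly iota g) = mu (map_poly iota g) /\
    mu (map_poly iota g) = trunc nu Q g.
Proof.
move=> g hg; rewrite -hn in hg.
exact: (final nu_val mu_val mu_ext hQ ha he hemin hg).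
Qed.
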